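(* For all integers $m\ge1$ and $v\ge1$, the untwisted Dowker sum satisfies $$S_{m,v,1}:=\sum_{k=1}^{m-1}\csc^{2v}\!\left(\frac{k\pi}{m}\right)=2^{2v+1}\sum_{n=0}^{v-1}\left(\frac{m}{2\pi}\right)^{2v-2n}\frac{\Gamma(2v-2n)}{\Gamma(2v)}\,s(v,n)\left(1-\frac{1}{m^{2v-2n}}\right)\zeta(2v-2n).$$ In particular $S_{m,v,1}$ is a polynomial in $m^2$ of degree $v$ divisible by $m^2-1$.
   Context: For integers $v\ge1$ and $0\le n\le v-1$, $s(v,n)$ denotes the $n$-th elementary symmetric polynomial evaluated at $1^2,2^2,\dots,(v-1)^2$, with $s(v,0)=1$. $\zeta$ is the Riemann zeta function. Empty sums equal $0$. *)

(* Defs.v *)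
From Stdlib Require Import Reals List ClassicalEpsilon Factorial.
Import ListNotations.
Open Scope R_scope.

Fixpoint sumR (n : nat) (f : nat -> R) : R :=
  match n with
  | O => 0
  | S n' => sumR n' f + f n'
  end.

Fixpoint esym (l : list R) (n : nat) : R :=
  match l, n with
  | _, O => 1
  | nil, S _ => 0
  | x :: l', S n' => esym l' (S n') + x * esym l' n'
  end.

Definition s (v n : nat) : R :=
  esym (map (fun i => (INR (i + 1)) ^ 2) (seq 0 (v - 1))) n.

(* Riemann zeta at an integer s (meaningful for s >= 2): the limit of the
   partial sums of sum_{k>=1} 1/k^s, chosen by (classical) epsilon. *)
Definition zeta (s : nat) : R :=
  epsilon (inhabits 0)
    (fun l => Un_cv (fun N => sum_f_R0 (fun k => / (INR (k + 1)) ^ s) N) l).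

Definition GammaNat (k : nat) : R := INR (Factorial.fact (k - 1)).

Definition csc (x : R) : R := / sin x.

Definition Dowker (m v : nat) : R :=
  sumR (m - 1) (fun j => (csc (INR (j + 1) * PI / INR m)) ^ (2 * v)).

(* Main.v *)
Require Import Defs.
From Stdlib Require Import Reals List Lra Lia Psatz ZArith ClassicalEpsilon.
From Coquelicot Require Import Coquelicot.
Import ListNotations.
Open Scope R_scope.

Lemma sum_n_sumR (a : nat -> R) N : sum_n a N = sumR (S N) a.
Proof.
  induction N.
  - rewrite sum_O. simpl. ring.
  - rewrite sum_Sn, IHN. simpl. unfold plus; simpl. ring.
Qed.

Lemma is_series_telescope (u : nat -> R) :
  is_lim_seq u 0 -> is_series (fun k => u k - u (S k)) (u 0%nat).
Proof.
  intros H. unfold is_series.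
  change (is_lim_seq (sum_n (fun k => u k - u (S k))) (u 0%nat)).
  apply (is_lim_seq_ext (fun N => u 0%nat - u (S N))).
  - intros N. induction N.
    + rewrite sum_O. reflexivity.
    + rewrite sum_Sn, <- IHN. unfold plus; simpl. ring.
  - pose proof (is_lim_seq_minus' (fun _ => u 0%nat) (fun N => u (S N)) (u 0%nat) 0
      (is_lim_seq_const _) (proj1 (is_lim_seq_incr_1 u 0) H)) as H0.
    rewrite Rminus_0_r in H0. exact H0.
Qed.

Lemma lim_inv_shift (c : R) (n : nat) : is_lim_seq (fun k => c / INR (S n + k)) 0.
Proof.
  replace (Finite 0) with (Rbar_mult c 0) by (simpl; f_equal; ring).
  apply (is_lim_seq_scal_l (fun k => / INR (S n + k)) c 0).
  replace (Finite 0) with (Rbar_inv p_infty) by reflexivity.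
  apply is_lim_seq_inv; [|discriminate].
  apply (is_lim_seq_le_p_loc INR).
  - exists 0%nat. intros k _. apply le_INR. lia.
  - apply is_lim_seq_INR.
Qed.

Lemma tail_bound (a : nat -> R) :
  (forall l, (1 <= l)%nat -> Rabs (a l) <= 4 * (/ INR l - / INR (S l))) ->
  ex_series a /\ forall n, Rabs (Series a - sum_n a n) <= 4 / INR (S n).
Proof.
  intros Hb.
  assert (Htail : forall n, ex_series (fun k => a (S n + k)%nat) /\
     Rabs (Series (fun k => a (S n + k)%nat)) <= 4 / INR (S n)).
  { intros n.
    set (u := fun k => 4 / INR (S n + k)).
    assert (Hu : is_series (fun k => u k - u (S k)) (u 0%nat))
      by (apply is_series_telescope; apply lim_inv_shift).
    assert (Hle : forall k, Rabs (a (S n + k)%nat) <= u k - u (S k)).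
    { intros k. unfold u. replace (S n + S k)%nat with (S (S n + k)) by lia.
      unfold Rdiv. rewrite <- Rmult_minus_distr_l. apply Hb. lia. }
    assert (Hex : ex_series (fun k => Rabs (a (S n + k)%nat))).
    { apply (@ex_series_le R_AbsRing R_CompleteNormedModule _ (fun k => u k - u (S k))).

      - intros k. unfold norm; simpl. unfold abs; simpl. rewrite Rabs_Rabsolu. apply Hle.
      - eexists; exact Hu. }
    split. { apply ex_series_Rabs. exact Hex. }
    eapply Rle_trans. apply Series_Rabs. exact Hex.
    eapply Rle_trans. apply Series_le. 2: eexists; exact Hu.
    intros k. split. apply Rabs_pos. apply Hle.
    rewrite (is_series_unique _ _ Hu). unfold u. rewrite Nat.add_0_r. lra. }
  assert (Hex : ex_series a).
  { apply ex_series_incr_1. destruct (Htail 0%nat) as [H _]. exact H. }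
  split. exact Hex.
  intros n. rewrite (Series_incr_n a (S n)); [|lia|exact Hex].
  rewrite sum_n_Reals. simpl pred.
  replace (sum_f_R0 a n + Series (fun k => a (S n + k)%nat) - sum_f_R0 a n)
    with (Series (fun k => a (S n + k)%nat)) by ring.
  apply Htail.
Qed.
Definition T (p : nat) (x : R) (l : nat) : R :=
  / (INR l + x) ^ p + (-1) ^ p * / (INR l + 1 - x) ^ p.
Lemma T_deriv p x l : 0 < x < 1 -> is_derive (fun y => T p y l) x (- INR p * T (S p) x l).
Proof.
  intros Hx. pose proof (pos_INR l) as Hl.
  assert (Ha : INR l + x <> 0) by lra.
  assert (Hb : INR l + 1 + - x <> 0) by lra.
  unfold T. auto_derive.
  - split. apply pow_nonzero; exact Ha. split; [|auto]. apply pow_nonzero; exact Hb.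
  - replace (INR l + 1 - x) with (INR l + 1 + - x) by ring.
    set (a := INR l + x) in *. set (b := INR l + 1 + - x) in *.
    destruct p as [|q].
    + simpl. ring.
    + simpl pred. assert (a ^ q <> 0) by (apply pow_nonzero; auto).
      assert (b ^ q <> 0) by (apply pow_nonzero; auto).
      simpl. field. auto.
Qed.

Lemma inv_pow_le (y : R) l p : (1<=l)%nat -> (2<=p)%nat -> INR l <= y ->
  0 < / y^p <= 2*(/INR l - /INR (S l)).
Proof.
  intros Hl Hp Hy. assert (HL : 1 <= INR l) by (apply (le_INR 1); exact Hl).
  assert (Hyp : 0 < y ^ p) by (apply pow_lt; lra).
  split. apply Rinv_0_lt_compat; exact Hyp.
  apply Rle_trans with (/ (INR l * INR l)).
  - apply Rinv_le_contravar. nra.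
    apply Rle_trans with (y ^ 2). simpl. nra.
    apply Rle_pow; [lra|exact Hp].
  - rewrite S_INR.
    assert (E : 2 * (/ INR l - / (INR l + 1)) - / (INR l * INR l)
      = (INR l - 1) / (INR l * INR l * (INR l + 1))) by (field; lra).
    assert (0 <= (INR l - 1) / (INR l * INR l * (INR l + 1))).
    { apply Rdiv_le_0_compat. lra. apply Rmult_lt_0_compat; nra. }
    lra.
Qed.

Lemma T_bound p x l : (2<=p)%nat -> 0<x<1 -> (1<=l)%nat ->
  Rabs (T p x l) <= 4*(/INR l - /INR (S l)).
Proof.
  intros Hp Hx Hl. unfold T.
  destruct (inv_pow_le (INR l + x) l p Hl Hp) as [A1 A2]; [lra|].
  destruct (inv_pow_le (INR l + 1 - x) l p Hl Hp) as [B1 B2]; [lra|].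
  eapply Rle_trans. apply Rabs_triang. rewrite Rabs_mult, pow_1_abs.
  rewrite (Rabs_right (/ (INR l + x) ^ p)) by lra.
  rewrite (Rabs_right (/ (INR l + 1 - x) ^ p)) by lra. lra.
Qed.

Lemma T_ex p x : (2<=p)%nat -> 0<x<1 -> ex_series (T p x) /\
  forall n, Rabs (Series (T p x) - sum_n (T p x) n) <= 4 / INR (S n).
Proof. intros Hp Hx. apply tail_bound. intros l Hl. apply T_bound; auto. Qed.

Definition F p x := Series (T p x).

Lemma is_derive_sumR (f f' : nat -> R -> R) n x :
  (forall k, (k<n)%nat -> is_derive (f k) x (f' k x)) ->
  is_derive (fun y => sumR n (fun k => f k y)) x (sumR n (fun k => f' k x)).
Proof.
  induction n; intros H; simpl; apply is_derive_Reals.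
  - apply derivable_pt_lim_const.
  - apply (derivable_pt_lim_plus (fun y => sumR n (fun k => f k y)) (f n)).
    apply is_derive_Reals, IHn. intros; apply H; lia. apply is_derive_Reals, H; lia.
Qed.

Lemma sumR_mult_l c n f : sumR n (fun k => c * f k) = c * sumR n f.
Proof. induction n; simpl. ring. rewrite IHn. ring. Qed.

Lemma boule_half y : Boule (1/2) (mkposreal (1/2) ltac:(lra)) y <-> 0 < y < 1.
Proof. unfold Boule; simpl. split; intros H. apply Rabs_def2 in H. lra.
  apply Rabs_def1; lra. Qed.

Lemma F_deriv p x : (2<=p)%nat -> 0<x<1 -> is_derive (F p) x (- INR p * F (S p) x).
Proof.
  intros Hp Hx. apply is_derive_Reals.
  apply (CVU_derivable (fun N y => sum_n (T p y) N)
     (fun N y => sum_n (fun l => - INR p * T (S p) y l) N)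
     (F p) (fun y => - INR p * F (S p) y) (1/2) (mkposreal (1/2) ltac:(lra))).
  - intros eps Heps.
    destruct (archimed (4 * INR p / eps)) as [Ha _].
    assert (HN : (0 <= up (4 * INR p / eps))%Z).
    { apply le_IZR. assert (0 <= 4 * INR p / eps).
      { apply Rdiv_le_0_compat. pose proof (pos_INR p); lra. lra. } lra. }
    exists (Z.to_nat (up (4 * INR p / eps))). intros n y Hn Hy.
    apply boule_half in Hy.
    destruct (T_ex (S p) y ltac:(lia) Hy) as [_ Ht].
    rewrite !sum_n_sumR, sumR_mult_l, <- sum_n_sumR.
    unfold F. rewrite <- Rmult_minus_distr_l, Rabs_mult, Rabs_Ropp, Rabs_right
      by (apply Rle_ge, pos_INR).
    assert (HP : 0 < INR p) by (apply lt_0_INR; lia).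
    assert (Hn' : 4 * INR p / eps < INR (S n)).
    { rewrite S_INR. apply le_INR in Hn. rewrite INR_IZR_INZ, Z2Nat.id in Hn by exact HN. lra. }
    apply Rle_lt_trans with (INR p * (4 / INR (S n))).
    apply Rmult_le_compat_l; [lra|apply Ht].
    assert (0 < INR (S n)) by (apply lt_0_INR; lia).
    apply (Rmult_lt_reg_r (INR (S n) / (INR p))). apply Rdiv_lt_0_compat; lra.
    replace (INR p * (4 / INR (S n)) * (INR (S n) / INR p)) with 4 by (field; lra).
    apply (Rmult_lt_reg_r (/ eps)). apply Rinv_0_lt_compat; lra.
    replace (eps * (INR (S n) / INR p) * / eps) with (INR (S n) / INR p) by (field; lra).
    apply (Rmult_lt_reg_r (INR p)). lra.
    replace (INR (S n) / INR p * INR p) with (INR (S n)) by (field; lra).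
    replace (4 * / eps * INR p) with (4 * INR p / eps) by (field; lra). lra.
  - intros y Hy. apply boule_half in Hy. apply is_lim_seq_Reals.
    destruct (T_ex p y Hp Hy) as [He _]. apply Series_correct in He. exact He.
  - intros n y Hy. apply boule_half in Hy. apply is_derive_Reals.
    apply (is_derive_ext (fun y => sumR (S n) (fun l => T p y l))).
    { intros t. rewrite sum_n_sumR. reflexivity. }
    rewrite sum_n_sumR. apply (is_derive_sumR (fun l y => T p y l) (fun l y => - INR p * T (S p) y l)).
    intros k _. apply T_deriv; exact Hy.
  - apply boule_half; exact Hx.
Qed.

Lemma sin_lower y : 0 <= y -> y <= PI -> y - y^3/6 <= sin y.
Proof.
  intros H1 H2. destruct (SIN y H1 H2) as [H _].
  unfold sin_lb, sin_approx, sin_term in H. simpl in H.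
  assert (y <= 4) by (pose proof PI_4; lra).
  assert (0 <= y^5/120 - y^7/5040).
  { assert (0 <= y^5) by (apply pow_le; lra).
    replace (y^5/120 - y^7/5040) with (y^5 * (42 - y^2)/5040) by (simpl; field).
    apply Rdiv_le_0_compat; [|lra]. apply Rmult_le_pos; [lra|]. simpl; nra. }
  replace (INR (fact 3)) with 6 in H by (simpl; ring).
  replace (INR (fact 5)) with 120 in H by (simpl; ring).
  replace (INR (fact 7)) with 5040 in H by (simpl; ring).
  simpl in *. lra.
Qed.

Lemma near0 x : 0 < x <= 1/2 -> 0 <= PI^2/sin(PI*x)^2 - /x^2 <= 48.
Proof.
  intros Hx. pose proof PI_RGT_0. pose proof PI_4.
  set (y := PI * x).
  assert (Hy : 0 < y <= 2) by (unfold y; split; nra).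
  assert (Hs1 : y - y^3/6 <= sin y) by (apply sin_lower; unfold y; nra).
  assert (Hs2 : sin y < y) by (apply sin_lt_x; lra).
  set (s := sin y) in *.
  assert (Hs3 : y / 3 <= s) by (simpl in Hs1; nra).
  assert (Hs0 : 0 < s) by lra.
  assert (E : PI^2/s^2 - /x^2 = PI^2 * ((y-s)*(y+s)/(s^2*y^2))).
  { unfold y. field. split; lra. }
  rewrite E.
  assert (Hf : 0 <= (y-s)*(y+s)/(s^2*y^2) <= 3).
  { assert (Hd : 0 < s^2*y^2) by (simpl; apply Rmult_lt_0_compat; nra).
    split. apply Rdiv_le_0_compat; nra.
    apply (Rmult_le_reg_r (s^2*y^2)); [exact Hd|].
    replace ((y - s) * (y + s) / (s ^ 2 * y ^ 2) * (s ^ 2 * y ^ 2)) with ((y-s)*(y+s)) by (field; lra).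
    assert ((y-s)*(y+s) <= (y^3/6)*(2*y)).
    { apply Rmult_le_compat; try lra. }
    assert (y^2/9 <= s^2) by (simpl; nra).
    assert (0 <= y^2) by (simpl; nra).
    assert (3*(y^2/9)*y^2 <= 3*s^2*y^2) by nra.
    simpl in *. nra. }
  split. apply Rmult_le_pos; [simpl; nra|lra].
  assert (PI^2 <= 16) by (simpl; nra). nra.
Qed.

Lemma sumR_S n f : sumR (S n) f = sumR n f + f n.
Proof. reflexivity. Qed.

Definition Q y := PI^2 / sin(PI*y)^2.

Lemma sumR_pair a L : sumR L (fun l => a (2*l)%nat + a (S (2*l))) = sumR (2*L) a.
Proof.
  induction L. reflexivity.
  replace (2 * S L)%nat with (S (S (2*L))) by lia. rewrite !sumR_S, IHL. ring.
Qed.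

Lemma pair_series a : ex_series a -> Series (fun l => a (2*l)%nat + a (S (2*l))) = Series a.
Proof.
  intros He. apply is_series_unique. unfold is_series.
  change (is_lim_seq (sum_n (fun l => a (2*l)%nat + a (S (2*l)))) (Series a)).
  apply (is_lim_seq_ext (fun L => sum_n a (S (2*L)))).
  { intros L. rewrite !sum_n_sumR, sumR_pair. f_equal. lia. }
  apply (is_lim_seq_subseq (sum_n a) (Series a) (fun L => S (2*L))).
  - intros P [N HN]. exists N. intros n Hn. apply HN. lia.
  - apply Series_correct in He. exact He.
Qed.

Lemma T_dup x l : 0 < x < 1 ->
  T 2 (x/2) l + T 2 ((x+1)/2) l = 4 * (T 2 x (2*l)%nat + T 2 x (S (2*l))).
Proof.
  intros Hx. pose proof (pos_INR l). unfold T.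
  rewrite S_INR, mult_INR. simpl INR. simpl pow.
  field. repeat split; lra.
Qed.

Lemma F_dup x : 0 < x < 1 -> F 2 (x/2) + F 2 ((x+1)/2) = 4 * F 2 x.
Proof.
  intros Hx. unfold F.
  destruct (T_ex 2 (x/2) ltac:(lia) ltac:(lra)) as [E1 _].
  destruct (T_ex 2 ((x+1)/2) ltac:(lia) ltac:(lra)) as [E2 _].
  destruct (T_ex 2 x ltac:(lia) Hx) as [E3 _].
  rewrite <- Series_plus by assumption.
  rewrite (Series_ext _ (fun l => 4 * (T 2 x (2*l)%nat + T 2 x (S (2*l))))).
  2: intros; apply T_dup; exact Hx.
  rewrite Series_scal_l, pair_series by exact E3. reflexivity.
Qed.

Lemma sinPI_pos x : 0 < x < 1 -> 0 < sin (PI * x).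
Proof. intros Hx. pose proof PI_RGT_0. apply sin_gt_0; nra. Qed.

Lemma Q_dup x : 0 < x < 1 -> Q (x/2) + Q ((x+1)/2) = 4 * Q x.
Proof.
  intros Hx. pose proof (sinPI_pos x Hx) as Hs. unfold Q.
  replace (PI * ((x+1)/2)) with (PI * (x/2) + PI/2) by field.
  rewrite sin_plus, sin_PI2, cos_PI2.
  replace (PI * x) with (2 * (PI * (x/2))) in * by field.
  rewrite sin_2a in *.
  pose proof (sin2_cos2 (PI * (x/2))) as Hsc.
  set (s := sin (PI * (x/2))) in *. set (c := cos (PI * (x/2))) in *.
  assert (s <> 0) by (intro; subst; rewrite H in Hs; lra).
  assert (c <> 0) by (intro; rewrite H0 in Hs; lra).
  replace (PI^2/s^2 + PI^2/(s*0+c*1)^2) with (PI^2*(s^2+c^2)/(s^2*c^2)) by (field; auto).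
  unfold Rsqr in Hsc. replace (s^2+c^2) with 1 by (simpl; lra). field. auto.
Qed.

Lemma F_sym x : F 2 (1-x) = F 2 x.
Proof. unfold F. apply Series_ext. intros l. unfold T. simpl pow.
  replace (INR l + (1-x)) with (INR l + 1 - x) by ring.
  replace (INR l + 1 - (1 - x)) with (INR l + x) by ring. ring. Qed.

Lemma Q_sym x : Q (1-x) = Q x.
Proof. unfold Q. replace (PI * (1-x)) with (PI - PI*x) by ring. rewrite sin_PI_x. reflexivity. Qed.

Definition h x := F 2 x - Q x.

Lemma h_bound_half x : 0 < x <= 1/2 -> Rabs (h x) <= 56.
Proof.
  intros Hx.
  destruct (T_ex 2 x ltac:(lia) ltac:(lra)) as [E Ht].
  specialize (Ht 0%nat). rewrite sum_O in Ht. simpl INR in Ht.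
  unfold h, F in *.
  assert (HT0 : T 2 x 0 = / x^2 + / (1-x)^2).
  { unfold T. simpl INR. simpl pow. replace (0+1-x) with (1-x) by ring. replace (0+x) with x by ring. ring. }
  rewrite HT0 in Ht. pose proof (near0 x Hx). fold (Q x) in H.
  assert (0 < / (1-x)^2 <= 4).
  { split. apply Rinv_0_lt_compat. simpl; nra.
    replace 4 with (/ (1/2)^2) by (simpl; field).
    apply Rinv_le_contravar. simpl; nra. simpl; nra. }
  set (S := Series (T 2 x)) in *.
  apply Rabs_le. apply Rabs_le_between in Ht.
  replace (/ 1) with 1 in Ht by field. lra.
Qed.

Lemma h_bound x : 0 < x < 1 -> Rabs (h x) <= 56.
Proof.
  intros Hx. destruct (Rle_lt_dec x (1/2)).
  - apply h_bound_half; lra.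
  - replace (h x) with (h (1-x)). apply h_bound_half; lra.
    unfold h. rewrite F_sym, Q_sym. reflexivity.
Qed.

Lemma h_dup x : 0 < x < 1 -> h x = (h (x/2) + h ((x+1)/2)) / 4.
Proof. intros Hx. unfold h. pose proof (F_dup x Hx). pose proof (Q_dup x Hx). lra. Qed.

Lemma h_iter k : forall x, 0 < x < 1 -> Rabs (h x) <= 56 / 2^k.
Proof.
  induction k; intros x Hx.
  - simpl. replace (56/1) with 56 by field. apply h_bound; exact Hx.
  - rewrite h_dup by exact Hx.
    pose proof (IHk (x/2) ltac:(lra)). pose proof (IHk ((x+1)/2) ltac:(lra)).
    assert (0 < 2^k) by (apply pow_lt; lra).
    unfold Rdiv. rewrite Rabs_mult. rewrite (Rabs_right (/4)) by lra.
    eapply Rle_trans. apply Rmult_le_compat_r. lra. apply Rabs_triang.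
    simpl pow. rewrite Rinv_mult. unfold Rdiv in *. nra.
Qed.

Lemma INR_le_pow2 k : INR k <= 2^k.
Proof. induction k. simpl; lra. rewrite S_INR. simpl. assert (1 <= 2^k) by (apply pow_R1_Rle; lra). lra. Qed.

Lemma F2_Q x : 0 < x < 1 -> F 2 x = Q x.
Proof.
  intros Hx. assert (h x = 0); [|unfold h in H; lra].
  destruct (Req_dec (h x) 0) as [|Hn]; [assumption|exfalso].
  assert (Ha : 0 < Rabs (h x)) by (apply Rabs_pos_lt; exact Hn).
  destruct (archimed (56 / Rabs (h x))) as [Hu _].
  assert (HN : (0 <= up (56 / Rabs (h x)))%Z).
  { apply le_IZR. assert (0 <= 56 / Rabs (h x)) by (apply Rdiv_le_0_compat; lra). lra. }
  set (k := Z.to_nat (up (56 / Rabs (h x)))).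
  assert (Hk : 56 / Rabs (h x) < INR k).
  { unfold k. rewrite INR_IZR_INZ, Z2Nat.id by exact HN. lra. }
  pose proof (INR_le_pow2 k). pose proof (h_iter k x Hx).
  assert (0 < 2^k) by (apply pow_lt; lra).
  assert (56 < Rabs (h x) * 2^k).
  { apply (Rmult_lt_reg_r (/ Rabs (h x))). apply Rinv_0_lt_compat; lra.
    replace (Rabs (h x) * 2 ^ k * / Rabs (h x)) with (2^k) by (field; lra). unfold Rdiv in Hk. lra. }
  assert (Rabs (h x) * 2^k <= 56).
  { apply (Rmult_le_reg_r (/ 2^k)). apply Rinv_0_lt_compat; lra.
    replace (Rabs (h x) * 2 ^ k * / 2^k) with (Rabs (h x)) by (field; lra). exact H0. }
  lra.
Qed.

Lemma esym_0 l : esym l 0 = 1.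
Proof. destruct l; reflexivity. Qed.

Lemma esym_app l x n : esym (l ++ [x]) (S n) = esym l (S n) + x * esym l n.
Proof.
  revert n. induction l as [|y l IH]; intros n.
  - simpl. destruct n; simpl; ring.
  - simpl. destruct n.
    + rewrite IH, !esym_0. ring.
    + rewrite !IH. ring.
Qed.

Lemma esym_big l n : (length l < n)%nat -> esym l n = 0.
Proof.
  revert n. induction l as [|y l IH]; intros n Hn.
  - destruct n. simpl in Hn; lia. reflexivity.
  - destruct n. simpl in Hn; lia. simpl. rewrite !IH by (simpl in Hn; lia). ring.
Qed.

Lemma s_0 v : s v 0 = 1.
Proof. unfold s. destruct (map _ _); reflexivity. Qed.

Lemma s_big v n : (v <= n)%nat -> (1 <= n)%nat -> s v n = 0.
Proof. intros. unfold s. apply esym_big. rewrite length_map, length_seq. lia. Qed.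

Lemma s_rec v n : (1 <= v)%nat -> s (S v) (S n) = s v (S n) + INR v ^ 2 * s v n.
Proof.
  intros Hv. unfold s. replace (S v - 1)%nat with (S (v - 1)) by lia.
  rewrite seq_S, map_app. simpl map at 2. rewrite esym_app.
  replace (v - 1 + 1)%nat with v by lia. simpl. ring.
Qed.

Definition b v n := 4^n * (GammaNat (2*v - 2*n) / GammaNat (2*v)) * s v n.

Lemma G_pos k : 0 < GammaNat k.
Proof. unfold GammaNat. apply lt_0_INR. apply lt_O_fact. Qed.

Lemma b_v0 v : b v 0 = 1.
Proof. unfold b. rewrite s_0, Nat.sub_0_r, pow_O. pose proof (G_pos (2*v)). field. lra. Qed.

Lemma G_step k : (1 <= k)%nat -> GammaNat (2*k) * INR (2*k) * INR (2*k+1) = GammaNat (2*k+2).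
Proof.
  intros Hk. unfold GammaNat. destruct k as [|k]. lia.
  replace (2 * S k - 1)%nat with (S (2*k)) by lia.
  replace (2 * S k + 2 - 1)%nat with (S (S (S (2*k)))) by lia.
  replace (2 * S k)%nat with (S (S (2*k))) by lia.
  replace (S (S (2*k)) + 1)%nat with (S (S (S (2*k)))) by lia.
  change (fact (S (S (S (2*k))))) with (S (S (S (2*k))) * fact (S (S (2*k))))%nat.
  change (fact (S (S (2*k)))) with (S (S (2*k)) * fact (S (2*k)))%nat.
  rewrite !mult_INR. ring.
Qed.

Lemma G_ne k : GammaNat k <> 0.
Proof. pose proof (G_pos k). lra. Qed.

Lemma b_rec v n : (1<=v)%nat -> (n < v)%nat ->
  b (S v) (S n) * (INR (2*v) * INR (2*v+1)) =
  b v (S n) * INR (2*v - 2*S n) * INR (S (2*v - 2*S n)) + 4 * INR v ^2 * b v n.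
Proof.
  intros Hv Hn. unfold b.
  rewrite s_rec by exact Hv.
  pose proof (G_step v Hv) as Gv.
  replace (2 * S v)%nat with (2*v+2)%nat by lia.
  replace (2 * v + 2 - 2 * S n)%nat with (2*v - 2*n)%nat by lia.
  rewrite <- Gv.
  pose proof (G_pos (2*v)). pose proof (G_pos (2*v - 2*n)).
  assert (INR (2*v) <> 0) by (apply not_0_INR; lia).
  assert (INR (2*v+1) <> 0) by (apply not_0_INR; lia).
  destruct (Nat.eq_dec v (S n)) as [E|E].
  - subst v. rewrite (s_big (S n) (S n)) by lia.
    replace (2 * S n - 2 * n)%nat with 2%nat by lia.
    replace (2 * S n - 2 * S n)%nat with 0%nat by lia.
    replace (GammaNat 2) with 1 by (unfold GammaNat; simpl; ring).
    replace (GammaNat 0) with 1 by (unfold GammaNat; simpl; ring).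
    change (INR 0) with 0. rewrite <- tech_pow_Rmult. field. lra.
  - pose proof (G_step (v - S n) ltac:(lia)) as Gk.
    replace (2 * (v - S n))%nat with (2*v - 2*S n)%nat in Gk by lia.
    replace (2 * v - 2 * S n + 2)%nat with (2*v - 2*n)%nat in Gk by lia.
    replace (2 * v - 2 * S n + 1)%nat with (S (2 * v - 2 * S n)) in Gk by lia.
    rewrite <- Gk. simpl pow. field. lra.
Qed.

Definition K y := PI * cos (PI*y) / sin (PI*y).

Lemma Q_deriv y : 0<y<1 -> is_derive Q y (-2 * Q y * K y).
Proof.
  intros Hy. pose proof (sinPI_pos y Hy). unfold Q, K. auto_derive.
  - intro HH; nra.
  - simpl. field. lra.
Qed.

Lemma K_deriv y : 0<y<1 -> is_derive K y (- Q y).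
Proof.
  intros Hy. pose proof (sinPI_pos y Hy). unfold Q, K. auto_derive.
  - lra.
  - pose proof (sin2_cos2 (PI*y)). unfold Rsqr in H0.
    set (s := sin (PI*y)) in *. set (c := cos (PI*y)) in *.
    clearbody s c. field_simplify; try lra. replace (c^2) with (1 - s^2) by (simpl; lra).
    field. lra.
Qed.

Lemma K2 y : 0<y<1 -> K y ^ 2 = Q y - PI^2.
Proof.
  intros Hy. pose proof (sinPI_pos y Hy). unfold Q, K.
  pose proof (sin2_cos2 (PI*y)). unfold Rsqr in H0.
  set (s := sin (PI*y)) in *. set (c := cos (PI*y)) in *. clearbody s c.
  replace (c^2) with (1 - s^2) by (simpl; lra).
  replace ((PI * c / s)^2) with (PI^2 * c^2 / s^2) by (field; lra).
  replace (c^2) with (1 - s^2) by (simpl; lra).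
  field. lra.
Qed.

Lemma is_derive_cmul c f x l : is_derive f x l -> is_derive (fun t => c * f t) x (c * l).
Proof. intros H. apply is_derive_Reals. apply is_derive_Reals in H.
  apply (derivable_pt_lim_scal f c x l H). Qed.

Lemma Qv_deriv v y : 0<y<1 -> is_derive (fun z => Q z ^ v) y (-2 * INR v * Q y ^ v * K y).
Proof.
  intros Hy.
  pose proof (is_derive_pow Q v y _ (Q_deriv y Hy)) as H.
  destruct v as [|w].
  - simpl in *. replace (-2*0*1*K y) with (0 * (-2 * Q y * K y) * 1) by ring. exact H.
  - simpl pred in H. replace (-2 * INR (S w) * Q y ^ S w * K y) with
      (INR (S w) * (-2 * Q y * K y) * Q y ^ w) by (simpl; ring). exact H.
Qed.

Lemma QvK_deriv v y : 0<y<1 ->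
  is_derive (fun z => Q z ^ v * K z) y (-2 * INR v * Q y ^ v * K y ^ 2 - Q y ^ S v).
Proof.
  intros Hy.
  pose proof (is_derive_mult (fun z => Q z ^ v) K y _ _ (Qv_deriv v y Hy) (K_deriv y Hy)) as H.
  replace (-2 * INR v * Q y ^ v * K y ^ 2 - Q y ^ S v) with
    (-2 * INR v * Q y ^ v * K y * K y + Q y ^ v * - Q y) by (simpl; ring).
  apply H. intros; apply Rmult_comm.
Qed.

Lemma loc01 y : 0<y<1 -> locally y (fun t => 0 < t < 1).
Proof.
  intros Hy. assert (He : 0 < Rmin y (1-y)) by (apply Rmin_pos; lra).
  exists (mkposreal _ He). intros t Ht. simpl in Ht.
  unfold ball in Ht; simpl in Ht. unfold AbsRing_ball, abs, minus, plus, opp in Ht; simpl in Ht.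
  apply Rabs_def2 in Ht. pose proof (Rmin_l y (1-y)). pose proof (Rmin_r y (1-y)). lra.
Qed.

Lemma deriv_eq (f g : R -> R) y a c : locally y (fun t => f t = g t) ->
  is_derive f y a -> is_derive g y c -> a = c.
Proof.
  intros Hl Hf Hg. apply (is_derive_ext_loc f g) in Hf; [|exact Hl].
  rewrite <- (is_derive_unique g y a Hf). apply is_derive_unique. exact Hg.
Qed.

Lemma sumR_ext n f g : (forall k, (k < n)%nat -> f k = g k) -> sumR n f = sumR n g.
Proof. induction n; intros H; simpl. reflexivity. rewrite IHn by (intros; apply H; lia). rewrite H by lia. reflexivity. Qed.

Lemma sumR_plus n f g : sumR n (fun k => f k + g k) = sumR n f + sumR n g.
Proof. induction n; simpl. ring. rewrite IHn. ring. Qed.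

Lemma sumR_shift n f : sumR (S n) f = f 0%nat + sumR n (fun k => f (S k)).
Proof. induction n. simpl. ring. rewrite sumR_S, IHn. simpl. ring. Qed.

Definition RHS v y := sumR v (fun n => b v n * PI^(2*n) * F (2*v - 2*n) y).

Definition D1 v z := sumR v (fun n => b v n * PI^(2*n) * (- INR (2*v-2*n) * F (S (2*v-2*n)) z)).
Definition D2 v z := sumR v (fun n => b v n * PI^(2*n) *
   (- INR (2*v-2*n) * (- INR (S (2*v-2*n)) * F (S (S (2*v-2*n))) z))).

Lemma RHS_deriv v z : 0<z<1 -> is_derive (RHS v) z (D1 v z).
Proof.
  intros Hz. unfold RHS, D1.
  apply (is_derive_sumR (fun n z => b v n * PI^(2*n) * F (2*v - 2*n) z)
     (fun n z => b v n * PI^(2*n) * (- INR (2*v-2*n) * F (S (2*v-2*n)) z))).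
  intros k Hk. apply is_derive_scal. apply F_deriv. lia. exact Hz.
Qed.

Lemma D1_deriv v z : 0<z<1 -> is_derive (D1 v) z (D2 v z).
Proof.
  intros Hz. unfold D1, D2.
  apply (is_derive_sumR (fun n z => b v n * PI^(2*n) * (- INR (2*v-2*n) * F (S (2*v-2*n)) z))
     (fun n z => b v n * PI^(2*n) *
   (- INR (2*v-2*n) * (- INR (S (2*v-2*n)) * F (S (S (2*v-2*n))) z)))).
  intros k Hk. apply is_derive_scal. apply is_derive_scal. apply F_deriv. lia. exact Hz.
Qed.

Lemma ML_step v : (1<=v)%nat -> (forall y, 0<y<1 -> Q y ^ v = RHS v y) ->
  forall y, 0<y<1 -> Q y ^ S v = RHS (S v) y.
Proof.
  intros Hv IH.
  assert (S1 : forall z, 0<z<1 -> -2 * INR v * Q z ^ v * K z = D1 v z).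
  { intros z Hz. apply (deriv_eq (fun t => Q t ^ v) (RHS v) z).
    - apply (filter_imp (fun t => 0<t<1)). intros t Ht; apply IH; exact Ht. apply loc01; exact Hz.
    - apply Qv_deriv; exact Hz.
    - apply RHS_deriv; exact Hz. }
  assert (S2 : forall z, 0<z<1 ->
     -2*INR v*(-2 * INR v * Q z ^ v * K z ^ 2 - Q z ^ S v) = D2 v z).
  { intros z Hz. apply (deriv_eq (fun t => -2*INR v*(Q t ^ v * K t)) (D1 v) z).
    - apply (filter_imp (fun t => 0<t<1)). intros t Ht. rewrite <- S1 by exact Ht. ring.
      apply loc01; exact Hz.
    - apply is_derive_scal, QvK_deriv; exact Hz.
    - apply D1_deriv; exact Hz. }
  intros y Hy. specialize (S2 y Hy). rewrite K2 in S2 by exact Hy.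
  set (g := fun n => b v n * PI^(2*n) * (INR (2*v-2*n) * INR (S (2*v-2*n))) * F (S (S (2*v-2*n))) y).
  set (f := fun n => b (S v) n * PI^(2*n) * F (2 * S v - 2*n) y).
  assert (ED2 : D2 v y = sumR v g).
  { unfold D2. apply sumR_ext. intros k _. unfold g. ring. }
  assert (ER : RHS (S v) y = f 0%nat + sumR v (fun n => f (S n))).
  { unfold RHS. rewrite sumR_shift. reflexivity. }
  set (c := INR (2*v) * INR (2*v+1)).
  assert (Hc : 0 < c) by (unfold c; apply Rmult_lt_0_compat; apply lt_0_INR; lia).
  assert (E1 : c * sumR v (fun n => f (S n)) = sumR v (fun n => g (S n)) + 4*INR v^2*PI^2 * RHS v y).
  { unfold RHS. rewrite <- !sumR_mult_l, <- sumR_plus. apply sumR_ext. intros n Hn.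
    unfold f, g.
    replace (2 * S v - 2 * S n)%nat with (2*v - 2*n)%nat by lia.
    replace (S (S (2 * v - 2 * S n))) with (2*v - 2*n)%nat by lia.
    replace (PI ^ (2 * S n)) with (PI^2 * PI^(2*n)) by (rewrite <- pow_add; f_equal; lia).
    pose proof (b_rec v n Hv Hn) as Hb. fold c in Hb.
    replace (c * (b (S v) (S n) * (PI ^ 2 * PI ^ (2 * n)) * F (2 * v - 2 * n) y))
      with ((b (S v) (S n) * c) * (PI ^ 2 * PI ^ (2 * n)) * F (2 * v - 2 * n) y) by ring.
    rewrite Hb. ring. }
  assert (E2 : sumR v (fun n => g (S n)) = sumR v g + g v - g 0%nat).
  { pose proof (sumR_shift v g). rewrite sumR_S in H. lra. }
  assert (Eg0 : g 0%nat = c * f 0%nat).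
  { unfold g, f, c. rewrite !b_v0. rewrite !Nat.sub_0_r. simpl pow.
    replace (S (S (2*v))) with (2 * S v)%nat by lia.
    replace (S (2*v)) with (2*v+1)%nat by lia. ring. }
  assert (Egv : g v = 0).
  { unfold g. replace (2*v-2*v)%nat with 0%nat by lia. simpl INR. ring. }
  rewrite ER. apply (Rmult_eq_reg_l c); [|lra].
  rewrite Rmult_plus_distr_l, E1, E2, Egv, Eg0, <- IH by exact Hy.
  rewrite <- ED2, <- S2.
  unfold c. rewrite plus_INR, mult_INR. simpl INR. simpl pow. ring.
Qed.

Lemma ML v : (1<=v)%nat -> forall y, 0<y<1 -> Q y ^ v = RHS v y.
Proof.
  induction v as [|v IHv]; intros Hv. lia.
  destruct v as [|w].
  - intros y Hy. unfold RHS. simpl sumR. rewrite b_v0. simpl. rewrite <- F2_Q by exact Hy. ring.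
  - apply ML_step. lia. apply IHv. lia.
Qed.

Lemma ex_series_Rplus a b : ex_series a -> ex_series b -> ex_series (fun n => a n + b n).
Proof. intros [la Ha] [lb Hb]. exists (la + lb). exact (is_series_plus a b la lb Ha Hb). Qed.

Lemma ex_series_Rscal c a : ex_series a -> ex_series (fun n => c * a n).
Proof. intros [la Ha]. exists (c * la). exact (is_series_scal_l c a la Ha). Qed.

Lemma Series_zero : Series (fun _ => 0) = 0.
Proof. rewrite (Series_ext _ (fun n => 0 * 0)) by (intros; ring). rewrite Series_scal_l. ring. Qed.

Lemma sumR_series n (a : nat -> nat -> R) : (forall k, (k < n)%nat -> ex_series (a k)) ->
  ex_series (fun l => sumR n (fun k => a k l)) /\
  sumR n (fun k => Series (a k)) = Series (fun l => sumR n (fun k => a k l)).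
Proof.
  induction n; intros H; simpl.
  - split. exists 0. apply (is_series_ext (fun k => (fun _ : nat => 0) k - (fun _ : nat => 0) (S k))).
    intros; simpl; ring. apply (is_series_telescope (fun _ => 0)). apply is_lim_seq_const.
    rewrite Series_zero. reflexivity.
  - destruct IHn as [E1 E2]. intros; apply H; lia.
    split. apply ex_series_Rplus. exact E1. apply H; lia.
    rewrite Series_plus. rewrite E2. reflexivity. exact E1. apply H; lia.
Qed.

Definition Zs p := Series (fun k => / INR (k+1) ^ p).

Lemma Z_ex p : (2<=p)%nat -> ex_series (fun k => / INR (k+1) ^ p) /\ 1 <= Zs p.
Proof.
  intros Hp.
  assert (He : ex_series (fun k => / INR (k+1) ^ p)).
  { apply tail_bound. intros l Hl.
    destruct (inv_pow_le (INR (l+1)) l p Hl Hp) as [A B].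
    apply le_INR; lia. rewrite Rabs_right by lra. lra. }
  split. exact He. unfold Zs. rewrite Series_incr_1 by exact He.
  replace (/ INR (0+1) ^ p) with 1 by (simpl; rewrite pow1; field).
  assert (0 <= Series (fun k => / INR (S k + 1) ^ p)).
  { rewrite <- Series_zero. apply Series_le.
    intros n. split. lra. apply Rlt_le, Rinv_0_lt_compat, pow_lt, lt_0_INR. lia.
    apply ex_series_incr_1 in He. exact He. }
  lra.
Qed.

Lemma zeta_Z p : (2<=p)%nat -> zeta p = Zs p.
Proof.
  intros Hp. destruct (Z_ex p Hp) as [He _].
  assert (HZ : Un_cv (fun N => sum_f_R0 (fun k => / INR (k+1) ^ p) N) (Zs p)).
  { apply is_lim_seq_Reals. apply (is_lim_seq_ext (sum_n (fun k => / INR (k+1) ^ p))).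
    intros N. apply sum_n_Reals. apply Series_correct in He. exact He. }
  unfold zeta.
  pose proof (epsilon_spec (inhabits 0)
    (fun l => Un_cv (fun N => sum_f_R0 (fun k => / INR (k+1) ^ p) N) l)
    (ex_intro _ (Zs p) HZ)) as H.
  eapply UL_sequence. exact H. exact HZ.
Qed.

Lemma sumR_app n m a : sumR (n + m) a = sumR n a + sumR m (fun k => a (n + k)%nat).
Proof. induction m. rewrite Nat.add_0_r. simpl. ring.
  rewrite Nat.add_succ_r, !sumR_S, IHm. ring. Qed.

Lemma sumR_block L m a : sumR L (fun l => sumR m (fun k => a (l*m+k)%nat)) = sumR (L*m) a.
Proof. induction L. reflexivity. rewrite sumR_S, IHL.
  replace (S L * m)%nat with (L*m + m)%nat by lia. rewrite sumR_app. reflexivity. Qed.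

Lemma group_series a m : (1<=m)%nat -> ex_series a ->
  is_series (fun l => sumR m (fun k => a (l*m+k)%nat)) (Series a).
Proof.
  intros Hm He. unfold is_series.
  change (is_lim_seq (sum_n (fun l => sumR m (fun k => a (l*m+k)%nat))) (Series a)).
  apply (is_lim_seq_ext (fun L => sum_n a (S L * m - 1))).
  { intros L. rewrite !sum_n_sumR, sumR_block. f_equal. destruct m. lia. simpl. lia. }
  apply (is_lim_seq_subseq (sum_n a) (Series a) (fun L => S L * m - 1)%nat).
  - intros P [N HN]. exists N. intros n Hn. apply HN. destruct m. lia. simpl. lia.
  - apply Series_correct in He. exact He.
Qed.

Lemma sumR_rev n h : sumR n (fun k => h (n - 1 - k)%nat) = sumR n h.
Proof.
  induction n. reflexivity.
  rewrite sumR_shift.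
  rewrite (sumR_ext n (fun k => h (S n - 1 - S k)%nat) (fun k => h (n - 1 - k)%nat)).
  rewrite IHn. rewrite sumR_S. replace (S n - 1 - 0)%nat with n by lia. ring. intros; f_equal; lia.
Qed.

Lemma inv_div_pow A M p : M <> 0 -> A <> 0 -> / (A / M) ^ p = M ^ p * / A ^ p.
Proof. intros. unfold Rdiv. rewrite Rpow_mult_distr, pow_inv. field.
  split; apply pow_nonzero; auto. Qed.

Definition az p (N : nat) := / INR (N+1) ^ p.

Lemma T_at j m' k l : (k < m')%nat ->
  T (2*j) (INR (k+1) / INR (S m')) l =
  INR (S m') ^ (2*j) * (az (2*j) (l * S m' + k) + az (2*j) (l * S m' + (m' - 1 - k))).
Proof.
  intros Hk. unfold T, az. rewrite pow_1_even, Rmult_1_l.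
  assert (HM : INR (S m') <> 0) by (apply not_0_INR; lia).
  replace (INR l + INR (k+1) / INR (S m')) with (INR (l * S m' + k + 1) / INR (S m')).
  2: { rewrite !plus_INR, mult_INR. field. exact HM. }
  replace (INR l + 1 - INR (k+1) / INR (S m')) with (INR (l * S m' + (m' - 1 - k) + 1) / INR (S m')).
  2: { replace (l * S m' + (m' - 1 - k) + 1)%nat with (l * S m' + (m' - k))%nat by lia.
       rewrite plus_INR, mult_INR, minus_INR by lia. rewrite plus_INR, !S_INR. simpl INR. field. rewrite <- S_INR; exact HM. }
  rewrite !inv_div_pow; try exact HM; try (apply not_0_INR; lia). ring.
Qed.

Lemma Fsum j m : (1<=j)%nat -> (1<=m)%nat ->
  sumR (m-1) (fun k => F (2*j) (INR (k+1) / INR m)) =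
  2 * INR m ^ (2*j) * (1 - / INR m ^ (2*j)) * Zs (2*j).
Proof.
  intros Hj Hm. destruct m as [|m']. lia. replace (S m' - 1)%nat with m' by lia.
  set (p := (2*j)%nat). assert (Hp : (2 <= p)%nat) by (unfold p; lia).
  set (M := INR (S m')).
  assert (HM : 0 < M) by (apply lt_0_INR; lia).
  assert (HMp : 0 < M ^ p) by (apply pow_lt; exact HM).
  assert (Hy : forall k, (k < m')%nat -> 0 < INR (k+1) / M < 1).
  { intros k Hk. split. apply Rdiv_lt_0_compat. apply lt_0_INR; lia. exact HM.
    apply (Rmult_lt_reg_r M). exact HM. unfold Rdiv. rewrite Rmult_assoc, Rinv_l, Rmult_1_r by lra.
    unfold M. rewrite Rmult_1_l. apply lt_INR. lia. }
  destruct (sumR_series m' (fun k => T p (INR (k+1) / M))) as [_ E].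
  { intros k Hk. apply T_ex. exact Hp. apply Hy; exact Hk. }
  unfold F. rewrite E.
  destruct (Z_ex p Hp) as [Ha _]. fold (az p) in Ha.
  set (a := az p) in *.
  pose proof (group_series a (S m') ltac:(lia) Ha) as G.
  rewrite (Series_ext _ (fun l => (2 * M^p) * sumR (S m') (fun k => a (l*S m'+k)%nat) + (-2) * a l)).
  2: { intros l.
       rewrite (sumR_ext m' _ (fun k => M^p * (a (l*S m'+k)%nat + a (l*S m' + (m'-1-k))%nat)))
         by (intros k Hk; apply T_at; exact Hk).
       rewrite sumR_mult_l, sumR_plus.
       pose proof (sumR_rev m' (fun k => a (l * S m' + k)%nat)) as HR. cbv beta in HR. rewrite HR.
       rewrite sumR_S.
       assert (Ea : a (l * S m' + m')%nat = / M^p * a l).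
       { unfold a, az. replace (INR (l * S m' + m' + 1)) with (INR (l+1) * M).
         rewrite Rpow_mult_distr, Rinv_mult. ring.
         unfold M. rewrite !plus_INR, mult_INR, S_INR. rewrite S_INR. simpl. ring. }
       rewrite Ea. field. lra. }
  rewrite Series_plus.
  2: { apply ex_series_Rscal. eexists; exact G. }
  2: { apply ex_series_Rscal. exact Ha. }
  rewrite !Series_scal_l, (is_series_unique _ _ G). unfold Zs. fold (az p). fold a.
  field. lra.
Qed.

Lemma sumR_swap a b' (f : nat -> nat -> R) :
  sumR a (fun j => sumR b' (fun n => f j n)) = sumR b' (fun n => sumR a (fun j => f j n)).
Proof.
  induction a; simpl. induction b'; simpl. reflexivity. rewrite <- IHb'. ring.
  rewrite IHa, <- sumR_plus. reflexivity.
Qed.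

Lemma csc_Q m j v : (1 <= m)%nat -> (j < m - 1)%nat ->
  csc (INR (j+1) * PI / INR m) ^ (2*v) = / PI^(2*v) * Q (INR (j+1) / INR m) ^ v.
Proof.
  intros Hm Hj. unfold csc, Q.
  pose proof PI_RGT_0.
  assert (Hy : 0 < INR (j+1) / INR m < 1).
  { assert (0 < INR m) by (apply lt_0_INR; lia). split. apply Rdiv_lt_0_compat; [apply lt_0_INR; lia|lra].
    apply (Rmult_lt_reg_r (INR m)). lra. unfold Rdiv. rewrite Rmult_assoc, Rinv_l, Rmult_1_r, Rmult_1_l by lra.
    apply lt_INR; lia. }
  pose proof (sinPI_pos _ Hy).
  replace (PI * (INR (j+1) / INR m)) with (INR (j+1) * PI / INR m) in * by
    (field; apply not_0_INR; lia).
  set (s := sin (INR (j+1) * PI / INR m)) in *.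
  rewrite !pow_mult, <- pow_inv, <- Rpow_mult_distr. f_equal.
  simpl. field. lra.
Qed.

Lemma Dowker_formula v m : (1<=v)%nat -> (1<=m)%nat ->
  Dowker m v = / PI^(2*v) *
    sumR v (fun n => b v n * PI^(2*n) * (2 * INR m ^ (2*(v-n)) * (1 - / INR m ^ (2*(v-n))) * Zs (2*(v-n)))).
Proof.
  intros Hv Hm. unfold Dowker.
  rewrite (sumR_ext _ _ (fun j => / PI^(2*v) * RHS v (INR (j+1) / INR m))).
  2: { intros j Hj. rewrite csc_Q by assumption. f_equal. apply ML. exact Hv.
       assert (0 < INR m) by (apply lt_0_INR; lia). split. apply Rdiv_lt_0_compat; [apply lt_0_INR; lia|lra].
       apply (Rmult_lt_reg_r (INR m)). lra. unfold Rdiv. rewrite Rmult_assoc, Rinv_l, Rmult_1_r, Rmult_1_l by lra.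
       apply lt_INR; lia. }
  rewrite sumR_mult_l. f_equal. unfold RHS.
  rewrite sumR_swap. apply sumR_ext. intros n Hn.
  rewrite sumR_mult_l. f_equal.
  replace (2*v - 2*n)%nat with (2*(v-n))%nat by lia.
  apply Fsum. lia. exact Hm.
Qed.

Lemma term_eq v n M : (n < v)%nat -> 0 < M ->
  / PI^(2*v) * (b v n * PI^(2*n) * (2 * M ^ (2*(v-n)) * (1 - / M ^ (2*(v-n))) * Zs (2*(v-n)))) =
  2 ^ (2*v+1) * ((M / (2 * PI)) ^ (2 * v - 2 * n) * (GammaNat (2 * v - 2 * n) / GammaNat (2 * v))
        * s v n * (1 - / M ^ (2 * v - 2 * n)) * zeta (2 * v - 2 * n)).
Proof.
  intros Hn HM. pose proof PI_RGT_0.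
  replace (2*v - 2*n)%nat with (2*(v-n))%nat by lia.
  rewrite zeta_Z by lia. unfold b.
  replace (2*(v-n))%nat with (2*(v-n))%nat by lia.
  set (k := (v - n)%nat).
  replace (2*v - 2*n)%nat with (2*k)%nat by (unfold k; lia).
  replace (2*v+1)%nat with (S (2*n + 2*k)) by (unfold k; lia).
  replace (2*v)%nat with (2*n + 2*k)%nat at 1 by (unfold k; lia).
  rewrite pow_add, <- tech_pow_Rmult, pow_add.
  replace (4 ^ n) with (2 ^ (2*n)) by (rewrite pow_mult; f_equal; ring).
  unfold Rdiv. rewrite Rpow_mult_distr, pow_inv, Rpow_mult_distr.
  pose proof (G_ne (2*k)). pose proof (G_ne (2*v)).
  assert (PI^(2*n) <> 0) by (apply pow_nonzero; lra).
  assert (PI^(2*k) <> 0) by (apply pow_nonzero; lra).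
  assert (2^(2*k) <> 0) by (apply pow_nonzero; lra).
  assert (2^(2*n) <> 0) by (apply pow_nonzero; lra).
  assert (M^(2*k) <> 0) by (apply pow_nonzero; lra).
  field. repeat split; auto.
Qed.

Lemma geom X k : X ^ k - 1 = (X - 1) * sumR k (fun j => X ^ j).
Proof. induction k. simpl. ring. rewrite sumR_S. simpl. rewrite Rmult_plus_distr_l, <- IHk. ring. Qed.

Lemma tri v (c w : nat -> R) :
  sumR v (fun n => c n * sumR (v - n) w) = sumR v (fun j => sumR (v - j) c * w j).
Proof.
  induction v. reflexivity.
  rewrite (sumR_ext (S v) (fun n => c n * sumR (S v - n) w)
     (fun n => c n * sumR (v - n) w + c n * w (v - n)%nat)).
  2: { intros n Hn. replace (S v - n)%nat with (S (v - n)) by lia. rewrite sumR_S. ring. }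
  rewrite (sumR_ext (S v) (fun j => sumR (S v - j) c * w j)
     (fun j => sumR (v - j) c * w j + c (v - j)%nat * w j)).
  2: { intros n Hn. replace (S v - n)%nat with (S (v - n)) by lia. rewrite sumR_S. ring. }
  rewrite !sumR_plus.
  assert (AB : sumR (S v) (fun n => c n * w (v - n)%nat) = sumR (S v) (fun j => c (v - j)%nat * w j)).
  { pose proof (sumR_rev (S v) (fun j => c (v - j)%nat * w j)) as HR. cbv beta in HR.
    rewrite <- HR. apply sumR_ext. intros k Hk. f_equal; f_equal; lia. }
  rewrite AB. f_equal.
  rewrite (sumR_S v (fun n => c n * sumR (v - n) w)).
  rewrite (sumR_S v (fun j => sumR (v - j) c * w j)). rewrite IHv.
  replace (v - v)%nat with 0%nat by lia. simpl sumR. ring.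
Qed.

Theorem mainTheorem9 :
  forall v : nat, (1 <= v)%nat ->
    (forall m : nat, (1 <= m)%nat ->
      Dowker m v =
      2 ^ (2 * v + 1) *
      sumR v (fun n =>
        (INR m / (2 * PI)) ^ (2 * v - 2 * n)
        * (GammaNat (2 * v - 2 * n) / GammaNat (2 * v))
        * s v n
        * (1 - / (INR m) ^ (2 * v - 2 * n))
        * zeta (2 * v - 2 * n)))
    /\
    (exists q : nat -> R,
      q (v - 1)%nat <> 0 /\
      forall m : nat, (1 <= m)%nat ->
        Dowker m v =
        ((INR m) ^ 2 - 1) * sumR v (fun j => q j * (INR m) ^ (2 * j))).
Proof.
  intros v Hv.
  assert (P1 : forall m : nat, (1 <= m)%nat ->
      Dowker m v =
      2 ^ (2 * v + 1) *
      sumR v (fun n =>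
        (INR m / (2 * PI)) ^ (2 * v - 2 * n)
        * (GammaNat (2 * v - 2 * n) / GammaNat (2 * v))
        * s v n
        * (1 - / (INR m) ^ (2 * v - 2 * n))
        * zeta (2 * v - 2 * n))).
  { intros m Hm. rewrite Dowker_formula by assumption.
    rewrite <- !sumR_mult_l. apply sumR_ext. intros n Hn.
    apply term_eq. exact Hn. apply lt_0_INR; lia. }
  split. exact P1.
  pose proof PI_RGT_0.
  set (c := fun n => 2 ^ (2*v+1) * / (2*PI) ^ (2*v-2*n) * (GammaNat (2 * v - 2 * n) / GammaNat (2 * v))
        * s v n * zeta (2 * v - 2 * n)).
  exists (fun j => sumR (v - j) c). split.
  - replace (v - (v - 1))%nat with 1%nat by lia. simpl sumR. unfold c.
    rewrite Nat.sub_0_r, s_0. rewrite zeta_Z by lia.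
    destruct (Z_ex (2*v) ltac:(lia)) as [_ HZ].
    pose proof (G_pos (2*v)).
    assert (0 < 2 ^ (2*v+1)) by (apply pow_lt; lra).
    assert (0 < / (2*PI) ^ (2*v)) by (apply Rinv_0_lt_compat, pow_lt; lra).
    assert (0 < GammaNat (2*v) / GammaNat (2*v)) by (apply Rdiv_lt_0_compat; lra).
    apply Rgt_not_eq. rewrite Rplus_0_l. apply Rmult_gt_0_compat; [|lra].
    apply Rmult_gt_0_compat; [|lra]. apply Rmult_gt_0_compat; [apply Rmult_gt_0_compat; lra|lra].
  - intros m Hm. rewrite P1 by exact Hm.
    assert (HM : 0 < INR m) by (apply lt_0_INR; lia).
    rewrite <- sumR_mult_l.
    rewrite (sumR_ext v _ (fun n => c n * (sumR (v - n) (fun j => INR m ^ (2*j)) * (INR m ^ 2 - 1)))).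
    2: { intros n Hn. unfold c.
         replace (2*v - 2*n)%nat with (2*(v-n))%nat by lia.
         rewrite (pow_mult (INR m) 2 (v - n)).
         rewrite (sumR_ext _ (fun j => INR m ^ (2*j)) (fun j => (INR m ^ 2) ^ j))
           by (intros; apply pow_mult).
         replace (sumR (v - n) (fun j => (INR m ^ 2) ^ j) * (INR m ^ 2 - 1)) with
           ((INR m ^ 2) ^ (v-n) - 1) by (rewrite geom; ring).
         rewrite <- (pow_mult (INR m) 2 (v - n)).
         unfold Rdiv. rewrite Rpow_mult_distr, pow_inv.
         assert (INR m ^ (2*(v-n)) <> 0) by (apply pow_nonzero; lra).
         assert ((2*PI) ^ (2*(v-n)) <> 0) by (apply pow_nonzero; lra).
         pose proof (G_ne (2*v)). field; auto. }
    rewrite (sumR_ext v _ (fun n => (INR m ^ 2 - 1) * (c n * sumR (v - n) (fun j => INR m ^ (2*j)))))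
      by (intros; ring).
    rewrite sumR_mult_l, tri. reflexivity.
Qed.
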